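(* Consider a $K$-armed bandit with horizon $n \geq K$ and a unique optimal action $a^*$, and assume $\mu(a) \in [0,1]$ for all $a \in [K]$. Run the algorithm described in the context with confidence parameter $\delta = 1/n^{3}$. Then there is a universal constant $C>0$ such that the expected regret satisfies $$R_n \;\le\; C\left(\sum_{a\in[K]}\Delta(a) + \frac{K\log n}{\Delta_{\min}}\right),$$ that is, $R_n = O\!\left(\frac{K\log n}{\Delta_{\min}}\right)$, where $\Delta_{\min} \coloneqq \min_{a \neq a^*} \Delta(a) > 0$.
   Context: $K$-armed bandit: actions $a\in[K]=\{1,\dots,K\}$ (identified with the standard basis vectors $e_1,\dots,e_K$ of $\mathbb{R}^K$), with unknown mean rewards $\mu(a)$. In each round $t=1,\dots,n$ the learner takes an action $A_t$ and observes $Y_t=\mu(A_t)+\eta_t$, where, conditionally on the past (previous actions and rewards and the current action), $\eta_t$ is $1$-sub-Gaussian with mean zero. Optimal action $a^*=\arg\max_a \mu(a)$; gap $\Delta(a)=\mu(a^* )-\mu(a)$. Regret $R_n=\mathbb{E}\big[\sum_{t=1}^n(\mu(a^* )-\mu(A_t))\big]$. Notation: $T_t(a)=\sum_{s=1}^{t-1}\mathbb{1}\{A_s=a\}$; $\hat\mu_t(a)=T_t(a)^{-1}\sum_{s=1}^{t-1}\mathbb{1}\{A_s=a\}Y_s$; $c_t(a)=\sqrt{2\log(1/\delta)/T_t(a)}$ for $\delta\in(0,1)$; $U_t(a)=\hat\mu_t(a)+c_t(a)$, $L_t(a)=\hat\mu_t(a)-c_t(a)$. Algorithm: in rounds $t=1,\dots,K$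 take each action once. In each round $t\ge K+1$, form the plausible set $\tilde{A}_t=\{a\in[K]: U_t(a)\ge \max_{a'\in[K]}L_t(a')\}$ and take $A_t\in\arg\max_{a\in\tilde A_t} 1/T_t(a)$ (i.e. a least-taken plausible action; ties broken arbitrarily). This equals maximizing $\log\det(V_t+e_ae_a^\top)$ over plausible actions, where $V_t=\sum_{s<t}e_{A_s}e_{A_s}^\top$. *)

(* Defs.v *)
From mathcomp Require Import all_boot all_order all_algebra.
From mathcomp Require Import all_classical all_reals all_analysis.
Import Order.TTheory GRing.Theory Num.Theory.

Set Implicit Arguments.
Unset Strict Implicit.
Unset Printing Implicit Defensive.

Local Open Scope ring_scope.
Local Open Scope classical_set_scope.

Section Bandit.
Variables (R : realType) (T : Type) (K : nat).
(* A t w : action taken in round t (rounds are numbered 1, 2, ...);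
   Y t w : reward observed in round t. *)
Variables (A : nat -> T -> 'I_K) (Y : nat -> T -> R).

Definition pulls (t : nat) (a : 'I_K) (w : T) : nat :=
  (\sum_(1 <= s < t) (A s w == a))%N.

Definition muhat (t : nat) (a : 'I_K) (w : T) : R :=
  (pulls t a w)%:R^-1 * \sum_(1 <= s < t | A s w == a) Y s w.

Definition conf (delta : R) (t : nat) (a : 'I_K) (w : T) : R :=
  Num.sqrt (2 * ln (delta^-1) / (pulls t a w)%:R).

Definition ucb delta t a w : R := muhat t a w + conf delta t a w.
Definition lcb delta t a w : R := muhat t a w - conf delta t a w.

Definition plausible (delta : R) (t : nat) (w : T) (a : 'I_K) : Prop :=
  forall a' : 'I_K, lcb delta t a' w <= ucb delta t a w.

Definition alg_round (delta : R) (t : nat) (w : T) : Prop :=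
  plausible delta t w (A t w) /\
  forall a, plausible delta t w a ->
    (pulls t a w)%:R^-1 <= (pulls t (A t w) w)%:R^-1 :> R.
End Bandit.

Definition history_gen (R : realType) (T : Type) (K : nat)
  (A : nat -> T -> 'I_K) (Y : nat -> T -> R) (t : nat) : set (set T) :=
  [set B | exists s (a : 'I_K), (1 <= s <= t)%N /\ B = A s @^-1` [set a]] `|`
  [set B | exists s (S : set R), [/\ (1 <= s < t)%N, measurable S &
                                     B = Y s @^-1` S]].

Definition history (R : realType) (T : Type) (K : nat)
  (A : nat -> T -> 'I_K) (Y : nat -> T -> R) (t : nat) : set (set T) :=
  <<s history_gen A Y t >>.

(* Main.v *)
Require Import Defs.
From mathcomp Require Import all_boot all_order all_algebra.
From mathcomp Require Import all_classical all_reals all_analysis.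
From mathcomp Require Import measurable_realfun.
From mathcomp Require Import ring lra zify.
Import Order.TTheory GRing.Theory Num.Theory.
Import numFieldNormedType.Exports.
Local Open Scope ring_scope.
Local Open Scope classical_set_scope.
Set Implicit Arguments.
Unset Strict Implicit.
Unset Printing Implicit Defensive.


Lemma mfin (R : realType) (K : nat) d' (T' : measurableType d') (X : T' -> 'I_K)
  (g : 'I_K -> R) : (forall a, measurable (X @^-1` [set a])) ->
  measurable_fun setT (fun w => g (X w)).
Proof.
move=> mX.
have -> : (fun w => g (X w)) =
   (fun w => \sum_(a < K) g a * \1_(X @^-1` [set a]) w).
  apply/funext => w; rewrite (bigD1 (X w)) //= indicE mem_set// mulr1.
  rewrite big1 ?addr0 // => b bX; rewrite indicE memNset ?mulr0 //=.
  by move=> Xb; move: bX; rewrite Xb eqxx.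
apply: measurable_sum => a; apply: measurable_realfun.measurable_funM.
  exact: measurable_cst.
exact: measurable_realfun.measurable_indic.
Qed.

Lemma msum_in (R : realType) d' (T' : measurableType d') (r : seq nat)
  (F : nat -> T' -> R) :
  (forall s, s \in r -> measurable_fun setT (F s)) ->
  measurable_fun setT (fun w => \sum_(s <- r) F s w).
Proof.
elim: r => [|x r IH] H.
  by under eq_fun do rewrite big_nil; exact: measurable_cst.
under eq_fun do rewrite big_cons.
apply: measurable_realfun.measurable_funD; first by apply: H; rewrite inE eqxx.
by apply: IH => s sr; apply: H; rewrite inE sr orbT.
Qed.

Section Meas.
Context (R : realType) (d : measure_display) (T : measurableType d)
  (K : nat) (mu : 'I_K -> R) (A : nat -> T -> 'I_K) (Y eta : nat -> T -> R).
Hypothesis hAm : forall t (a : 'I_K), measurable (A t @^-1` [set a]).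
Hypothesis hetam : forall t, measurable_fun setT (eta t).
Hypothesis hY : forall t w, Y t w = mu (A t w) + eta t w.

Definition HT t := g_sigma_algebraType (history_gen A Y t).

Lemma mY s : measurable_fun setT (Y s).
Proof.
have -> : Y s = (fun w => mu (A s w) + eta s w) by apply/funext => w; rewrite hY.
apply: measurable_realfun.measurable_funD; last exact: hetam.
exact: mfin.
Qed.

Lemma hist_meas t : history A Y t `<=` measurable.
Proof.
apply: smallest_sub; first exact: sigma_algebra_measurable.
move=> B [[s [a [_ ->]]]|[s [S [_ mS ->]]]]; first exact: hAm.
by rewrite -[_ @^-1` _]setTI; exact: mY.
Qed.

Lemma mA_HT t s (g : 'I_K -> R) : (1 <= s <= t)%N ->
  measurable_fun setT (fun w : HT t => g (A s w)).
Proof.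
move=> hs; apply: mfin => a; apply: sub_sigma_algebra; left.
by exists s, a.
Qed.

Lemma mY_HT t s : (1 <= s < t)%N -> measurable_fun setT (Y s : HT t -> R).
Proof.
move=> hs _ B mB; rewrite setTI; apply: sub_sigma_algebra; right.
by exists s, B.
Qed.

Lemma meta_HT t s : (1 <= s < t)%N -> measurable_fun setT (eta s : HT t -> R).
Proof.
move=> hs.
have -> : eta s = (fun w => Y s w - mu (A s w)).
  by apply/funext => w; rewrite hY addrC addKr.
apply: measurable_realfun.measurable_funB; first exact: mY_HT.
apply: mA_HT; case/andP: hs => -> /ltnW ->; done.
Qed.

Lemma HT_T t (f : T -> R) : measurable_fun setT (f : HT t -> R) ->
  measurable_fun setT f.
Proof.
move=> mf _ B mB; apply: hist_meas; exact: (mf measurableT B mB).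
Qed.

End Meas.

Section KL.
Context (R : realType) (d : measure_display) (T : measurableType d)
  (P : measure T R) (G : set (set T)).
Hypothesis hG : <<s G>> `<=` measurable.
Variables (g : T -> R) (c : R).
Hypothesis g0 : forall w, 0 <= g w.
Hypothesis mg : measurable_fun setT g.
Hypothesis c0 : 0 <= c.
Hypothesis hB : forall B, <<s G>> B ->
  (\int[P]_(w in B) (g w)%:E <= c%:E * P B)%E.

Definition Cl (h : T -> R) := [/\ forall w, 0 <= h w, measurable_fun setT h &
  (\int[P]_w (h w * g w)%:E <= c%:E * \int[P]_w (h w)%:E)%E].

Lemma Cl_indic B : <<s G>> B -> Cl (\1_B).
Proof.
move=> GB; have mB := hG GB; split.
- by move=> w; rewrite indicE; case: (_ \in _).
- exact: measurable_realfun.measurable_indic.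
- rewrite integral_indic // setIT.
  rewrite (_ : \int[P]_w _ = \int[P]_(w in B) (g w)%:E)%E; first exact: hB.
  rewrite [RHS]integral_mkcond; apply: eq_integral => w _; rewrite /patch indicE.
  by case: ifP => _; rewrite ?mul1r ?mul0r.
Qed.

Lemma Cl0 : Cl (fun _ => 0).
Proof.
split => //.

under eq_integral do rewrite mul0r.
by rewrite !integral0 mule0.
Qed.

Lemma Cl_add h1 h2 : Cl h1 -> Cl h2 -> Cl (fun w => h1 w + h2 w).
Proof.
move=> [p1 m1 i1] [p2 m2 i2]; split.
- by move=> w; rewrite addr_ge0.
- exact: measurable_realfun.measurable_funD.
- have mm1 : measurable_fun setT (fun w => h1 w * g w).
    exact: measurable_realfun.measurable_funM.
  have mm2 : measurable_fun setT (fun w => h2 w * g w).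
    exact: measurable_realfun.measurable_funM.
  under eq_integral do rewrite mulrDl EFinD.
  rewrite ge0_integralD //; last 4 first.
  + by move=> w _; rewrite lee_fin mulr_ge0.
  + exact/measurable_realfun.measurable_EFinP.
  + by move=> w _; rewrite lee_fin mulr_ge0.
  + exact/measurable_realfun.measurable_EFinP.
  under [X in (_ <= _ * X)%E]eq_integral do rewrite EFinD.
  rewrite [X in (_ <= _ * X)%E]ge0_integralD //; last 4 first.
  + by move=> w _; rewrite lee_fin.
  + exact/measurable_realfun.measurable_EFinP.
  + by move=> w _; rewrite lee_fin.
  + exact/measurable_realfun.measurable_EFinP.
  rewrite ge0_muleDr; last 2 first.
  + by apply: integral_ge0 => w _; rewrite lee_fin.
  + by apply: integral_ge0 => w _; rewrite lee_fin.
  exact: leeD.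
Qed.

Lemma Cl_scale h r : 0 <= r -> Cl h -> Cl (fun w => r * h w).
Proof.
move=> r0 [p1 m1 i1]; split.
- by move=> w; rewrite mulr_ge0.
- by apply: measurable_realfun.measurable_funM => //; exact: measurable_cst.
- have mm1 : measurable_fun setT (fun w => h w * g w).
    exact: measurable_realfun.measurable_funM.
  under eq_integral do rewrite -mulrA EFinM.
  rewrite (@ge0_integralZl _ _ _ P setT measurableT (fun w => (h w * g w)%:E)) //; last 2 first.
  + exact/measurable_realfun.measurable_EFinP.
  + by move=> w _; rewrite lee_fin mulr_ge0.
  under [X in (_ <= _ * X)%E]eq_integral do rewrite EFinM.
  rewrite [X in (_ <= _ * X)%E](@ge0_integralZl _ _ _ P setT measurableT (fun w => (h w)%:E)) //; last 2 first.
  + exact/measurable_realfun.measurable_EFinP.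
  + by move=> w _; rewrite lee_fin.
  rewrite muleCA; apply: lee_wpmul2l => //.
Qed.

Lemma Cl_sum N (F : nat -> T -> R) : (forall j, Cl (F j)) ->
  Cl (fun w => \sum_(j < N) F j w).
Proof.
move=> HF; elim: N => [|N IH].
  by under eq_fun do rewrite big_ord0; exact: Cl0.
under eq_fun do rewrite big_ord_recr /=.
exact: Cl_add.
Qed.

Variable f : T -> R.
Hypothesis f0 : forall w, 0 <= f w.
Hypothesis mf : measurable_fun setT (f : g_sigma_algebraType G -> R).

Let F : g_sigma_algebraType G -> \bar R := EFin \o f.
Let mF : measurable_fun setT (EFin \o f : g_sigma_algebraType G -> \bar R).
Proof. exact/measurable_realfun.measurable_EFinP. Qed.

Let ap k : T -> R := approx (setT : set (g_sigma_algebraType G)) F k.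

Lemma Cl_ap k : Cl (ap k).
Proof.
rewrite /ap /approx.
apply: Cl_add.
  apply: (@Cl_sum _ (fun j w => j%:R * 2 ^- k * \1_(dyadic_approx setT F k j) w)).
  move=> j; apply: Cl_scale => //.
  apply: Cl_indic; rewrite /dyadic_approx; case: ifPn => _; last first.
    exact: (@measurable0 _ (g_sigma_algebraType G)).
  rewrite -preimage_comp.
  apply: mF => //; apply/measurable_image_EFin; exact: measurable_itv.
apply: Cl_scale => //; apply: Cl_indic.
exact: (@emeasurable_fun_c_infty _ (g_sigma_algebraType G)).
Qed.

Lemma KL : (\int[P]_w (f w * g w)%:E <= c%:E * \int[P]_w (f w)%:E)%E.
Proof.
have mfT : measurable_fun setT f.
  move=> _ B mB; apply: hG; exact: (mf (@measurableT _ (g_sigma_algebraType G)) mB).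
have F0 : forall x, (setT : set (g_sigma_algebraType G)) x -> (0 <= F x)%E.
  by move=> x _; rewrite /F /= lee_fin.
have cv w : ap k w @[k --> \oo] --> f w.
  have := @cvg_approx _ (g_sigma_algebraType G) R setT F w F0 I (ltry _).
  by rewrite /F /=.
have lim_eq w : limn (fun k => (ap k w * g w)%:E) = (f w * g w)%:E.
  rewrite (_ : (fun k => _) = EFin \o (fun k => ap k w * g w)) //.
  have cv2 : (fun k => ap k w * g w) @ \oo --> f w * g w.
    exact: cvgMr_tmp.
  by rewrite EFin_lim ?(cvg_lim _ cv2) //; apply/cvg_ex; exists (f w * g w).
have mg' k : measurable_fun setT (fun w => (ap k w * g w)%:E).
  apply/measurable_realfun.measurable_EFinP.
  apply: measurable_realfun.measurable_funM => //.
  by case: (Cl_ap k).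
have g'0 k w : setT w -> (0 <= (ap k w * g w)%:E)%E.
  by move=> _; rewrite lee_fin mulr_ge0 //; case: (Cl_ap k).
have nd k m w : (k <= m)%N -> (ap k w * g w <= ap m w * g w).
  move=> km; apply: ler_wpM2r => //.
  by have := @nd_approx _ (g_sigma_algebraType G) R setT F k m km => /lefP; apply.
have hc := @cvg_monotone_convergence _ _ _ P setT measurableT
  (fun k w => (ap k w * g w)%:E) mg' g'0 (fun w _ k m km => nd k m w km).
have -> : (\int[P]_w (f w * g w)%:E =
    \int[P]_(x in setT) (fun x0 => limn (fun k => (ap k x0 * g x0)%:E)) x)%E.
  by apply: eq_integral => w _; rewrite lim_eq.
rewrite -(cvg_lim _ hc) //; apply: lime_le; first by apply/cvg_ex; eexists; exact: hc.
near=> k.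
have [ap0 map_ i_ap] := Cl_ap k.
apply: (le_trans i_ap); apply: lee_wpmul2l; first by rewrite lee_fin.
apply: ge0_le_integral => //.
- by move=> w _; rewrite lee_fin.
- exact/measurable_realfun.measurable_EFinP.
- exact/measurable_realfun.measurable_EFinP.
- move=> w _.
  by have := @le_approx _ (g_sigma_algebraType G) R setT F k w F0 I.
Unshelve. all: by end_near.
Qed.

End KL.

Section Mart.
Context (R : realType) (d : measure_display) (T : measurableType d)
  (P : probability T R)
  (K n : nat) (mu : 'I_K -> R) (A : nat -> T -> 'I_K) (Y eta : nat -> T -> R).
Hypothesis hAm : forall t (a : 'I_K), measurable (A t @^-1` [set a]).
Hypothesis hetam : forall t, measurable_fun setT (eta t).
Hypothesis hY : forall t w, Y t w = mu (A t w) + eta t w.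
Hypothesis hnoise : forall t, (1 <= t <= n)%N ->
       P.-integrable setT (EFin \o eta t) /\
       forall B, history A Y t B ->
         (\int[P]_(w in B) (eta t w)%:E = 0)%E /\
         forall lam : R,
           (\int[P]_(w in B) (expR (lam * eta t w))%:E
              <= (expR (lam ^+ 2 / 2))%:E * P B)%E.

Definition Mf (a : 'I_K) (l : R) (t : nat) (w : T) : R :=
  expR (\sum_(1 <= s < t) (A s w == a)%:R * (l * eta s w - l ^+ 2 / 2)).

Lemma Mf_HT a l t : measurable_fun setT (Mf a l t : HT A Y t -> R).
Proof.
apply: measurableT_comp; first exact: measurable_expR.
apply: msum_in => s; rewrite mem_index_iota => hs.
apply: measurable_funM.
  have hs' : (1 <= s <= t)%N by case/andP: hs => -> /ltnW ->.
  exact: (@mA_HT R d T K A Y t s (fun b => (b == a)%:R) hs').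
apply: measurable_funB; last exact: measurable_cst.
apply: measurable_funM; first exact: measurable_cst.
exact: (meta_HT hY).
Qed.

Lemma Mf_ge0 a l t w : 0 <= Mf a l t w.
Proof. exact: expR_ge0. Qed.

Lemma Mf_T a l t : measurable_fun setT (Mf a l t).
Proof. apply: (HT_T hAm hetam hY); exact: Mf_HT. Qed.

Lemma Mf_le1 a l t : (t <= 1)%N -> Mf a l t = fun _ => 1.
Proof. by move=> t1; apply/funext => w; rewrite /Mf big_geq // expR0. Qed.

Lemma EMf a l t : (t <= n.+1)%N -> (\int[P]_w (Mf a l t w)%:E <= 1)%E.
Proof.
have base : (\int[P]_w ((fun _ : T => 1 : R) w)%:E = 1)%E.
  by rewrite integral_cst // mul1e; apply: probability_setT.
elim: t => [|t IH] ht.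
  by rewrite Mf_le1 // base.
case: (posnP t) => [t0|t0].
  by rewrite t0 Mf_le1 // base.
have htn : (1 <= t <= n)%N by rewrite t0.
apply: le_trans (IH (ltnW ht)).
pose f1 w := Mf a l t w * (A t w != a)%:R.
pose f2 w := Mf a l t w * (A t w == a)%:R * expR (- (l ^+ 2 / 2)).
pose g w := expR (l * eta t w).
have e1 : forall w, Mf a l t.+1 w = f1 w + f2 w * g w.
  move=> w; rewrite /f1 /f2 /g /Mf big_nat_recr //= expRD.
  case: eqP => _ /=.
    by rewrite mul1r mulr0 add0r mulr1 -mulrA -(expRD (- _)) (addrC (- _)).
  by rewrite mul0r expR0 !mulr1 mulr0 !mul0r addr0.
have mg : measurable_fun setT g.
  apply: measurableT_comp; first exact: measurable_expR.
  by apply: measurable_funM; [exact: measurable_cst|exact: hetam].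
have mAT : measurable_fun setT (fun w => (A t w == a)%:R : R).
  exact: (mfin (fun b => (b == a)%:R) (hAm t)).
have mAT' : measurable_fun setT (fun w => (A t w != a)%:R : R).
  exact: (mfin (fun b => (b != a)%:R) (hAm t)).
have mM : measurable_fun setT (Mf a l t) by exact: Mf_T.
have mf1 : measurable_fun setT f1 by exact: measurable_funM.
have mf2 : measurable_fun setT f2.
  by apply: measurable_funM; [exact: measurable_funM|exact: measurable_cst].
have f10 w : 0 <= f1 w by rewrite mulr_ge0 // ?Mf_ge0.
have f20 w : 0 <= f2 w by rewrite !mulr_ge0 // ?Mf_ge0 // expR_ge0.
have g0 w : 0 <= g w by exact: expR_ge0.
under eq_integral do rewrite e1 EFinD.
rewrite ge0_integralD //; last 4 first.
- by move=> w _; rewrite lee_fin.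
- exact/measurable_EFinP.
- by move=> w _; rewrite lee_fin mulr_ge0.
- by apply/measurable_EFinP; exact: measurable_funM.
have mf2H : measurable_fun setT (f2 : HT A Y t -> R).
  apply: measurable_funM; last exact: measurable_cst.
  apply: measurable_funM; first exact: Mf_HT.
  by apply: (@mA_HT R d T K A Y t t (fun b => (b == a)%:R)); rewrite t0 leqnn.
have hB : forall B, <<s history_gen A Y t >> B ->
    (\int[P]_(w in B) (g w)%:E <= (expR (l ^+ 2 / 2))%:E * P B)%E.
  by move=> B HB; have [_ /(_ B HB) [_ ->]] := hnoise htn.
have := @KL R d T P (history_gen A Y t) (hist_meas hAm hetam hY (t:=t)) g
  (expR (l ^+ 2 / 2)) g0 mg (expR_ge0 _) hB f2 f20 mf2H.
move=> hK.
apply: le_trans (leeD (lexx _) hK) _.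
have mf2E : measurable_fun setT (fun w => (f2 w)%:E) by exact/measurable_EFinP.
have f2E0 : forall w, setT w -> (0 <= (f2 w)%:E)%E by move=> w _; rewrite lee_fin.
have k0 : (0 <= (expR (l ^+ 2 / 2))%:E)%E by rewrite lee_fin expR_ge0.
rewrite -(ge0_integralZl P measurableT mf2E f2E0 k0).
rewrite -ge0_integralD //; last 4 first.
- by move=> w _; rewrite lee_fin.
- exact/measurable_EFinP.
- by move=> w _; rewrite lee_fin mulr_ge0 // expR_ge0.
- apply/measurable_EFinP; apply: measurable_funM => //; exact: measurable_cst.
have h10 : forall x, setT x -> (0 <= (f1 x)%:E + (expR (l ^+ 2 / 2))%:E * (f2 x)%:E)%E.
  by move=> w _; rewrite -EFinM -EFinD lee_fin addr_ge0 // mulr_ge0 // expR_ge0.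
have hm1 : measurable_fun setT (fun x => ((f1 x)%:E + (expR (l ^+ 2 / 2))%:E * (f2 x)%:E)%E).
  apply: emeasurable_funD; first exact/measurable_EFinP.
  apply: emeasurable_funM => //; exact: measurable_cst.
have hm2 : measurable_fun setT (fun w => (Mf a l t w)%:E) by exact/measurable_EFinP.
apply: (@ge0_le_integral _ _ _ P setT measurableT _ _ h10 hm1 hm2).
move=> w _; rewrite -EFinM -EFinD lee_fin /f1 /f2.
have -> : expR (l ^+ 2 / 2) * (Mf a l t w * (A t w == a)%:R * expR (- (l ^+ 2 / 2)))
   = Mf a l t w * (A t w == a)%:R * (expR (- (l ^+ 2 / 2)) * expR (l ^+ 2 / 2)).
  by rewrite [RHS]mulrA mulrC.
rewrite -expRD addNr expR0 mulr1.
by case: eqP => _ /=; rewrite ?mulr0 ?mulr1 ?add0r ?addr0.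
Qed.

End Mart.

Section Det.
Context (R : realType) (T : Type)
  (K n : nat) (mu : 'I_K -> R) (astar : 'I_K)
  (A : nat -> T -> 'I_K) (Y eta : nat -> T -> R).
Hypothesis hK : (2 <= K)%N.
Hypothesis hn : (K <= n)%N.
Hypothesis hmu : forall a, 0 <= mu a <= 1.
Hypothesis hopt : forall a, a != astar -> mu a < mu astar.
Hypothesis hY : forall t w, Y t w = mu (A t w) + eta t w.
Hypothesis hinit : forall w (a : 'I_K), exists2 t, (1 <= t <= K)%N & A t w = a.
Hypothesis halg : forall t w, (K < t <= n)%N -> alg_round A Y (n%:R ^+ 3)^-1 t w.

Lemma pulls_rec t b w : (1 <= t)%N -> pulls A t.+1 b w = (pulls A t b w + (A t w == b))%N.
Proof. by move=> t1; rewrite /pulls big_nat_recr. Qed.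

Lemma sum_pulls t w : (\sum_(b < K) pulls A t b w = t.-1)%N.
Proof.
rewrite /pulls exchange_big /=.
rewrite (eq_bigr (fun _ => 1%N)); first by rewrite sum_nat_const_nat muln1 subn1.
move=> s _; rewrite (bigD1 (A s w)) //= eqxx big1 // => b /negPf.
by rewrite eq_sym => ->.
Qed.

Lemma pulls_init_ge1 b w : (1 <= pulls A K.+1 b w)%N.
Proof.
have [t0 ht0 At0] := hinit w b.
rewrite /pulls (bigD1_seq t0) ?mem_index_iota ?iota_uniq //=.
by rewrite At0 eqxx.
Qed.

Lemma pulls_init b w : pulls A K.+1 b w = 1%N.
Proof.
apply/eqP; rewrite eqn_leq pulls_init_ge1 andbT.
have h := sum_pulls K.+1 w; rewrite (bigD1 b) //= in h.
have h2 : (\sum_(i < K | i != b) 1 <= \sum_(i < K | i != b) pulls A K.+1 i w)%N.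
  by apply: leq_sum => i _; exact: pulls_init_ge1.
rewrite sum1_card cardC1 card_ord in h2.
have : (pulls A K.+1 b w + K.-1 <= K)%N by rewrite -[X in (_ <= X)%N]h leq_add2l.
move: hK; rewrite -subn1; lia.
Qed.

Lemma pulls_ge1 t b w : (K < t)%N -> (1 <= pulls A t b w)%N.
Proof.
elim: t => // t IH; rewrite ltnS leq_eqVlt => /orP[/eqP <-|Kt].
  by rewrite pulls_init.
rewrite pulls_rec; last exact: leq_ltn_trans (leq0n K) Kt.
exact: leq_trans (IH Kt) (leq_addr _ _).
Qed.

Lemma pulls_le t b w : (pulls A t b w <= t.-1)%N.
Proof.
rewrite /pulls; apply: (@leq_trans (\sum_(1 <= s < t) 1)%N).
  by apply: leq_sum => s _; exact: leq_b1.
by rewrite sum_nat_const_nat muln1 subn1.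
Qed.

Let dl : R := (n%:R ^+ 3)^-1.

Lemma n_ge1 : 1 <= n%:R :> R.
Proof. by rewrite ler1n; apply: leq_trans hn; exact: leq_trans hK. Qed.

Lemma Ld_ge0 : 0 <= ln (dl^-1).
Proof. by rewrite /dl invrK; apply: ln_ge0; apply: exprn_ege1; exact: n_ge1. Qed.

Lemma core t w a :
  (forall b, `|muhat A Y t b w - mu b| <= conf A dl t b w) -> (K < t <= n)%N ->
  A t w = a -> a != astar ->
  (mu astar - mu a) ^+ 2 * (pulls A t a w)%:R <= 32 * ln (dl^-1).
Proof.
move=> G /andP[Kt tn] Ata aa.
have hp b : 0 < (pulls A t b w)%:R :> R by rewrite ltr0n; exact: pulls_ge1.
have hb1 b : muhat A Y t b w - conf A dl t b w <= mu b.
  by have := G b; rewrite ler_norml => /andP[h1 h2]; lra.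
have hb2 b : mu b <= muhat A Y t b w + conf A dl t b w.
  by have := G b; rewrite ler_norml => /andP[h1 h2]; lra.
have plst : plausible A Y dl t w astar.
  move=> a'; rewrite /lcb /ucb.
  have h1 := hb1 a'; have h2 := hb2 astar.
  have : mu a' <= mu astar.
    by case: (eqVneq a' astar) => [->//|/hopt/ltW//].
  lra.
have [plA maxA] := halg w (introT andP (conj Kt tn)).
rewrite Ata in plA maxA.
have hinv := maxA astar plst.
have ple : (pulls A t a w)%:R <= (pulls A t astar w)%:R :> R.
  by rewrite -lef_pV2 ?posrE.
have L0 := Ld_ge0.
have cle : conf A dl t astar w <= conf A dl t a w.
  rewrite /conf; apply: ler_wsqrtr; apply: ler_wpM2l => //.
  by rewrite mulr_ge0.
have pl := plA astar; rewrite /lcb /ucb in pl.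
change (n%:R ^- 3) with dl in pl.
have h2 := hb1 a.
have c0 : 0 <= conf A dl t a w by exact: sqrtr_ge0.
have hD : mu astar - mu a <= 4 * conf A dl t a w.
  have := G astar; rewrite ler_norml => /andP[h5 h6].
  lra.
have D0 : 0 <= mu astar - mu a by rewrite subr_ge0 ltW // hopt.
have hsq : conf A dl t a w ^+ 2 = 2 * ln (dl^-1) / (pulls A t a w)%:R.
  by rewrite /conf sqr_sqrtr // divr_ge0 // mulr_ge0.
have hD2 : (mu astar - mu a) ^+ 2 <= 16 * (2 * ln (dl^-1) / (pulls A t a w)%:R).
  by rewrite -hsq; nra.
have := ler_wpM2r (ltW (hp a)) hD2.
rewrite -[16 * _ * _]mulrA divfK; last by rewrite gt_eqF // hp.
lra.
Qed.

Definition GoodW w := forall b t, (K < t <= n)%N ->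
  `|muhat A Y t b w - mu b| <= conf A dl t b w.

Lemma pulls_bound a w : GoodW w -> a != astar -> forall t, (K < t <= n.+1)%N ->
  (pulls A t a w)%:R <= 1 + 32 * ln (dl^-1) / (mu astar - mu a) ^+ 2.
Proof.
move=> G aa; have D0 : 0 < (mu astar - mu a) ^+ 2.
  by rewrite exprn_gt0 // subr_gt0 hopt.
have X0 : 0 <= 32 * ln (dl^-1) / (mu astar - mu a) ^+ 2.
  by apply: divr_ge0; [rewrite mulr_ge0 ?Ld_ge0 | exact: ltW].
elim => // t IH /andP[Kt tn].
case: (eqVneq t K) => [->|tK].
  by rewrite pulls_init lerDl.
have Kt' : (K < t)%N by move/eqP: tK => tK; lia.
rewrite pulls_rec; last by lia.
rewrite natrD; case: (eqVneq (A t w) a) => [Ata|Ata].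
  have Ktn : (K < t <= n)%N by rewrite Kt' -ltnS.
  have := core (fun b => G b t Ktn) Ktn Ata aa.
  move=> hc /=.
  have : (pulls A t a w)%:R <= 32 * ln (dl^-1) / (mu astar - mu a) ^+ 2.
    by rewrite ler_pdivlMr // mulrC.
  lra.
rewrite /= addr0; apply: IH.
by rewrite Kt' ltnW.
Qed.

Lemma reg_eq w : \sum_(1 <= t < n.+1) (mu astar - mu (A t w)) =
  \sum_(b < K) (mu astar - mu b) * (pulls A n.+1 b w)%:R.
Proof.
under [RHS]eq_bigr do rewrite /pulls natr_sum big_distrr /=.
rewrite exchange_big /=; apply: eq_bigr => s _.
rewrite (bigD1 (A s w)) //= eqxx mulr1 big1 ?addr0 // => b /negPf.
by rewrite eq_sym => ->; rewrite mulr0.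
Qed.

Lemma reg_le_n w : \sum_(1 <= t < n.+1) (mu astar - mu (A t w)) <= n%:R.
Proof.
apply: (@le_trans _ _ (\sum_(1 <= t < n.+1) (1 : R))).
  apply: ler_sum => i _.
  by have := hmu (A i w); have := hmu astar; move=> /andP[? ?] /andP[? ?]; lra.
by rewrite sumr_const_nat subn1 /=.
Qed.

Lemma reg_ge0 w : 0 <= \sum_(1 <= t < n.+1) (mu astar - mu (A t w)).
Proof.
apply: sumr_ge0 => i _; rewrite subr_ge0.
by case: (eqVneq (A i w) astar) => [->//|/hopt/ltW].
Qed.

Lemma reg_good w (Dmin : R) : GoodW w -> 0 < Dmin ->
  (forall a, a != astar -> Dmin <= mu astar - mu a) ->
  \sum_(1 <= t < n.+1) (mu astar - mu (A t w)) <=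
  \sum_(b < K) (mu astar - mu b) + K%:R * (32 * ln (dl^-1) / Dmin).
Proof.
move=> G D0 hD; rewrite reg_eq.
have -> : K%:R * (32 * ln (dl^-1) / Dmin) = \sum_(b < K) (32 * ln (dl^-1) / Dmin).
  by rewrite sumr_const card_ord mulr_natl.
rewrite -big_split /=.
apply: ler_sum => b _.
have X0 : 0 <= 32 * ln (dl^-1) / Dmin by apply: divr_ge0; [rewrite mulr_ge0 ?Ld_ge0 | exact: ltW].
case: (eqVneq b astar) => [->|ba].
  by rewrite subrr mul0r add0r.
have Db := hD b ba.
have Dp : 0 < mu astar - mu b by rewrite subr_gt0 hopt.
have hKn : (K < n.+1 <= n.+1)%N by rewrite leqnn ltnS hn.
have hpb := pulls_bound G ba hKn.
apply: le_trans (ler_wpM2l (ltW Dp) hpb) _.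
rewrite mulrDr mulr1 lerD2l.
have X1 : 0 <= 32 * ln (dl^-1) by rewrite mulr_ge0 ?Ld_ge0.
have -> : (mu astar - mu b) * (32 * ln (dl^-1) / (mu astar - mu b) ^+ 2) =
    32 * ln (dl^-1) / (mu astar - mu b).
  by field; rewrite gt_eqF.
apply: ler_wpM2l => //; rewrite lef_pV2 ?posrE //.
Qed.

End Det.

Section Bad.
Context (R : realType) (d : measure_display) (T : measurableType d)
  (K n : nat) (mu : 'I_K -> R) (A : nat -> T -> 'I_K) (Y eta : nat -> T -> R).
Hypothesis hK : (2 <= K)%N.
Hypothesis hn : (K <= n)%N.
Hypothesis hY : forall t w, Y t w = mu (A t w) + eta t w.
Hypothesis hinit : forall w (a : 'I_K), exists2 t, (1 <= t <= K)%N & A t w = a.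

Definition dlt : R := (n%:R ^+ 3)^-1.

Definition lam (m : nat) (s : bool) : R :=
  (if s then 1 else -1) * Num.sqrt (2 * ln (dlt^-1) / m%:R).

Lemma muhat_eq t b w : (0 < pulls A t b w)%N ->
  muhat A Y t b w - mu b =
  (\sum_(1 <= s < t) (A s w == b)%:R * eta s w) / (pulls A t b w)%:R.
Proof.
move=> p0.
have hp : (pulls A t b w)%:R != 0 :> R by rewrite pnatr_eq0 -lt0n.
have e : \sum_(1 <= s < t | A s w == b) Y s w =
    (pulls A t b w)%:R * mu b + \sum_(1 <= s < t) (A s w == b)%:R * eta s w.
  rewrite /pulls natr_sum big_distrl /= -big_split /= big_mkcond /=.
  apply: eq_bigr => s _; case: eqP => [<-|_] /=.
    by rewrite hY !mul1r.
  by rewrite !mul0r addr0.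
rewrite /muhat e; field.
exact: hp.
Qed.

Lemma Mf_eq b l t w :
  Mf A eta b l t w = expR (l * \sum_(1 <= s < t) (A s w == b)%:R * eta s w
                           - l ^+ 2 / 2 * (pulls A t b w)%:R).
Proof.
rewrite /Mf /pulls natr_sum !big_distrr /= -sumrB; congr expR.
by apply: eq_bigr => s _; ring.
Qed.

Lemma bad_case b t w : (K < t <= n)%N ->
  conf A dlt t b w < `|muhat A Y t b w - mu b| ->
  exists s, 1 <= dlt * Mf A eta b (lam (pulls A t b w) s) t w.
Proof.
move=> /andP[Kt tn] hc.
have p0 : (0 < pulls A t b w)%N by exact: (pulls_ge1 hK hn hinit).
set p := pulls A t b w in p0 hc *.
have pR : 0 < p%:R :> R by rewrite ltr0n.
rewrite muhat_eq // in hc.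
set S := \sum_(1 <= s < t) _ in hc.
set c := conf A dlt t b w in hc.
have Ld0 : 0 <= ln (dlt^-1) by exact: (Ld_ge0 R hK hn).
have c0 : 0 <= c by exact: sqrtr_ge0.
have hc2 : c ^+ 2 = 2 * ln (dlt^-1) / p%:R.
  by rewrite /c /conf sqr_sqrtr // divr_ge0 // mulr_ge0.
have hS : c * p%:R <= `|S|.
  move: hc; rewrite normrM normfV (gtr0_norm pR) ltr_pdivlMr // => /ltW //.
exists (0 <= S).
have hl : lam p (0 <= S) * S = c * `|S|.
  rewrite /lam -/c; case: (lerP 0 S) => hS0.
    by rewrite ger0_norm // mul1r.
  by rewrite ltr0_norm // mulN1r mulrN mulNr.
have hl2 : lam p (0 <= S) ^+ 2 = c ^+ 2.
  by rewrite /lam -/c; case: (0 <= S); rewrite ?mul1r ?mulN1r ?sqrrN.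
have n0 : (0 < n)%N by lia.
have dl0 : 0 < dlt by rewrite /dlt invr_gt0 exprn_gt0 // ltr0n.
rewrite Mf_eq -/S -/p hl hl2 hc2.
have e1 : 2 * ln dlt^-1 / p%:R / 2 * p%:R = ln (dlt^-1).
  by field; rewrite gt_eqF.
rewrite e1.
have : ln (dlt^-1) <= c * `|S| - ln (dlt^-1).
  have : c * (c * p%:R) <= c * `|S| by rewrite ler_wpM2l.
  rewrite mulrA -expr2 hc2 divfK ?gt_eqF //.
  lra.
have ninv : 0 < dlt^-1 by rewrite invr_gt0.
rewrite -ler_expR lnK ?posrE // => h.
have dn : dlt != 0 by rewrite gt_eqF.
rewrite -(mulfV dn) ler_wpM2l // ltW //.
Qed.

End Bad.

Section Final.
Context (R : realType) (d : measure_display) (T : measurableType d)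
  (P : probability T R)
  (K n : nat) (mu : 'I_K -> R) (astar : 'I_K) (Dmin : R)
  (A : nat -> T -> 'I_K) (Y eta : nat -> T -> R).
Hypothesis hK : (2 <= K)%N.
Hypothesis hn : (K <= n)%N.
Hypothesis hmu : forall a, 0 <= mu a <= 1.
Hypothesis hopt : forall a, a != astar -> mu a < mu astar.
Hypothesis hD1 : exists2 a, a != astar & Dmin = mu astar - mu a.
Hypothesis hD2 : forall a, a != astar -> Dmin <= mu astar - mu a.
Hypothesis hAm : forall t (a : 'I_K), measurable (A t @^-1` [set a]).
Hypothesis hetam : forall t, measurable_fun setT (eta t).
Hypothesis hY : forall t w, Y t w = mu (A t w) + eta t w.
Hypothesis hnoise : forall t, (1 <= t <= n)%N ->
       P.-integrable setT (EFin \o eta t) /\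
       forall B, history A Y t B ->
         (\int[P]_(w in B) (eta t w)%:E = 0)%E /\
         forall lam : R,
           (\int[P]_(w in B) (expR (lam * eta t w))%:E
              <= (expR (lam ^+ 2 / 2))%:E * P B)%E.
Hypothesis hinit : forall w (a : 'I_K), exists2 t, (1 <= t <= K)%N & A t w = a.
Hypothesis halg : forall t w, (K < t <= n)%N -> alg_round A Y (n%:R ^+ 3)^-1 t w.

Definition idx := ('I_K * 'I_n.+1 * 'I_n.+1 * bool)%type.

Definition term (i : idx) (w : T) : R :=
  dlt R n * Mf A eta i.1.1.1 (lam R n i.1.2 i.2) i.1.1.2 w.

Definition B1 : R := \sum_(b < K) (mu astar - mu b) +
  K%:R * (32 * ln ((dlt R n)^-1) / Dmin).

Definition Reg (w : T) : R := \sum_(1 <= t < n.+1) (mu astar - mu (A t w)).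

Lemma Dmin_gt0 : 0 < Dmin.
Proof. by case: hD1 => a aa ->; rewrite subr_gt0 hopt. Qed.

Lemma B1_ge0 : 0 <= B1.
Proof.
apply: addr_ge0.
  apply: sumr_ge0 => b _; rewrite subr_ge0.
  by case: (eqVneq b astar) => [->//|/hopt/ltW].
apply: mulr_ge0 => //; apply: divr_ge0; last exact: ltW Dmin_gt0.
by rewrite mulr_ge0 // (Ld_ge0 R hK hn).
Qed.

Lemma term_ge0 i w : 0 <= term i w.
Proof.
rewrite /term mulr_ge0 ?Mf_ge0 // /dlt invr_ge0 exprn_ge0 //.
Qed.

Lemma point w : Reg w <= B1 + n%:R * \sum_(i : idx) term i w.
Proof.
have S0 : 0 <= \sum_(i : idx) term i w by apply: sumr_ge0 => i _; exact: term_ge0.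
case: (pselect (GoodW n mu A Y w)) => [G|NG].
  apply: le_trans (reg_good hK hn hopt hinit halg G Dmin_gt0 hD2) _.
  by rewrite lerDl mulr_ge0.
move/existsNP: NG => [b /existsNP [t /not_implyP [Ktn /negP]]].
rewrite -ltNge => hc.
have [s hs] := bad_case hK hn hY hinit Ktn hc.
have tlt : (t < n.+1)%N by case/andP: Ktn => _; rewrite ltnS.
have plt : (pulls A t b w < n.+1)%N.
  apply: leq_ltn_trans (pulls_le A t b w) _.
  by case/andP: Ktn => Kt tn; lia.
pose i : idx := (b, Ordinal tlt, Ordinal plt, s).
have hi : 1 <= term i w by [].
have : 1 <= \sum_(i : idx) term i w.
  rewrite (bigD1 i) //=; apply: le_trans hi _.
  by rewrite lerDl sumr_ge0 // => j _; exact: term_ge0.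
move=> h1.
apply: le_trans (reg_le_n n astar A hmu w) _.
apply: le_trans (_ : n%:R * 1 <= _).
  by rewrite mulr1.
rewrite -[X in X <= _]add0r; apply: lerD; first exact: B1_ge0.
by apply: ler_wpM2l.
Qed.

Lemma mterm i : measurable_fun setT (term i).
Proof.
apply: measurable_funM; first exact: measurable_cst.
exact: (Mf_T hAm hetam hY).
Qed.

Lemma mReg : measurable_fun setT Reg.
Proof.
apply: msum_in => s _.
exact: (mfin (fun b => mu astar - mu b) (hAm s)).
Qed.

Lemma final : (\int[P]_w (Reg w)%:E <=
  (B1 + n%:R * (\sum_(k : idx) dlt R n))%:E)%E.
Proof.
have msum : measurable_fun setT (fun w => \sum_(i : idx) term i w).
  by apply: measurable_sum => i; exact: mterm.
have S0 w : 0 <= \sum_(i : idx) term i w by apply: sumr_ge0 => i _; exact: term_ge0.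
have h10 : forall w, setT w -> (0 <= (Reg w)%:E)%E.
  by move=> w _; rewrite lee_fin; exact: (reg_ge0 n A hopt).
have hm1 : measurable_fun setT (fun w => (Reg w)%:E) by exact/measurable_EFinP/mReg.
have hm2 : measurable_fun setT (fun w => (B1 + n%:R * \sum_(i : idx) term i w)%:E).
  apply/measurable_EFinP; apply: measurable_funD; first exact: measurable_cst.
  by apply: measurable_funM => //; exact: measurable_cst.
apply: le_trans (@ge0_le_integral _ _ _ P setT measurableT _ _ h10 hm1 hm2
  (fun w _ => point w)) _.
under eq_integral do rewrite EFinD EFinM -sumEFin.
have mt i : measurable_fun setT (fun w => (term i w)%:E) by exact/measurable_EFinP/mterm.
have t0 i : forall w, setT w -> (0 <= (term i w)%:E)%E by move=> w _; rewrite lee_fin term_ge0.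
have hb0 : forall x, setT x -> (0 <= ((fun _ : T => B1%:E) x))%E.
  by move=> w _; rewrite lee_fin B1_ge0.
have mb : measurable_fun setT (fun _ : T => B1%:E) by exact: measurable_cst.
have hs0 : forall x, setT x ->
    (0 <= (fun w => (n%:R)%:E * (\sum_(i : idx) (term i w)%:E)) x)%E.
  move=> w _; apply: mule_ge0; first by rewrite lee_fin.
  by apply: sume_ge0 => i _; rewrite lee_fin term_ge0.
have ms : measurable_fun setT (fun w => (n%:R)%:E * (\sum_(i : idx) (term i w)%:E))%E.
  apply: emeasurable_funM; first exact: measurable_cst.
  by apply: emeasurable_sum => i; exact: mt.
rewrite (ge0_integralD P measurableT hb0 mb hs0 ms).
rewrite integral_cst //.
rewrite [X in (B1%:E * X)%E](_ : _ = 1%E); last exact: probability_setT.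
rewrite mule1.
have hn0 : (0 <= (n%:R : R)%:E)%E by rewrite lee_fin.
have hs0' : forall x, setT x -> (0 <= (\sum_(i : idx) (term i x)%:E))%E.
  by move=> w _; apply: sume_ge0 => i _; rewrite lee_fin term_ge0.
have ms' : measurable_fun setT (fun w => (\sum_(i : idx) (term i w)%:E))%E.
  by apply: emeasurable_sum => i; exact: mt.
rewrite (ge0_integralZl P measurableT ms' hs0' hn0).
rewrite (ge0_integral_sum P measurableT mt t0).
have hdl : (0 <= (dlt R n)%:E)%E by rewrite lee_fin /dlt invr_ge0 exprn_ge0.
have hk : forall k : idx, (\int[P]_x (term k x)%:E <= (dlt R n)%:E)%E.
  move=> [[[a t] m] s]; rewrite /term /=.
  under eq_integral do rewrite EFinM.
  have mM : measurable_fun setT (fun w => (Mf A eta a (lam R n m s) t w)%:E).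
    exact/measurable_EFinP/(Mf_T hAm hetam hY).
  have M0 : forall w, setT w -> (0 <= (Mf A eta a (lam R n m s) t w)%:E)%E.
    by move=> w _; rewrite lee_fin Mf_ge0.
  rewrite (ge0_integralZl P measurableT mM M0 hdl).
  rewrite -[X in (_ <= X)%E]mule1; apply: lee_wpmul2l => //.
  apply: (EMf hAm hetam hY hnoise).
  exact: ltnW (ltn_ord t).
apply: (@le_trans _ _ (B1%:E + (n%:R)%:E * (\sum_(k : idx) (dlt R n)%:E))%E).
  apply: leeD2l; apply: lee_wpmul2l => //.
  by apply: lee_sum => k _; exact: hk.
by rewrite sumEFin -EFinM -EFinD.
Qed.

End Final.

Theorem theorem1 (R : realType) :
  exists C : R, 0 < C /\
  forall (d : measure_display) (T : measurableType d) (P : probability T R)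
    (K n : nat) (mu : 'I_K -> R) (astar : 'I_K) (Dmin : R)
    (A : nat -> T -> 'I_K) (Y eta : nat -> T -> R),
    (2 <= K)%N -> (K <= n)%N ->
    (forall a, 0 <= mu a <= 1) ->
    (* unique optimal action *)
    (forall a, a != astar -> mu a < mu astar) ->
    (* Dmin = min_{a <> astar} Delta(a) *)
    (exists2 a, a != astar & Dmin = mu astar - mu a) ->
    (forall a, a != astar -> Dmin <= mu astar - mu a) ->
    (* measurability of actions and noise *)
    (forall t (a : 'I_K), measurable (A t @^-1` [set a])) ->
    (forall t, measurable_fun setT (eta t)) ->
    (* reward model *)
    (forall t w, Y t w = mu (A t w) + eta t w) ->
    (* noise: conditionally on the history (previous actions and rewards and
       the current action), eta_t is mean zero and 1-sub-Gaussian *)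
    (forall t, (1 <= t <= n)%N ->
       P.-integrable setT (EFin \o eta t) /\
       forall B, history A Y t B ->
         (\int[P]_(w in B) (eta t w)%:E = 0)%E /\
         forall lam : R,
           (\int[P]_(w in B) (expR (lam * eta t w))%:E
              <= (expR (lam ^+ 2 / 2))%:E * P B)%E) ->
    (* rounds 1..K: each action is taken once *)
    (forall w (a : 'I_K), exists2 t, (1 <= t <= K)%N & A t w = a) ->
    (* rounds K+1..n: the algorithm with delta = 1/n^3 *)
    (forall t w, (K < t <= n)%N -> alg_round A Y (n%:R ^+ 3)^-1 t w) ->
    (\int[P]_w (\sum_(1 <= t < n.+1) (mu astar - mu (A t w)))%:E
       <= (C * (\sum_(a : 'I_K) (mu astar - mu a)
                + K%:R * ln (n%:R) / Dmin))%:E)%E.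

Proof.
exists 112; split => // d T P K n mu astar Dmin A Y eta hK hn hmu hopt hD1 hD2
  hAm hetam hY hnoise hinit halg.
have hf := final hK hn hmu hopt hD1 hD2 hAm hetam hY hnoise hinit halg.
apply: le_trans hf _; rewrite lee_fin /B1.
rewrite sumr_const !card_prod !card_ord card_bool.
set S := \sum_(b < K) _.
have S0 : 0 <= S.
  apply: sumr_ge0 => b _; rewrite subr_ge0.
  by case: (eqVneq b astar) => [->//|/hopt/ltW].
have n2 : (2 <= n)%N by exact: leq_trans hK hn.
have n1 : 1 <= n%:R :> R by rewrite ler1n; exact: leq_trans _ n2.
have x0 : 0 < n%:R :> R by exact: lt_le_trans n1.
have hL : ln ((dlt R n)^-1) = 3 * ln n%:R.
  by rewrite /dlt invrK lnXn // mulr_natl.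
have L2 : 1 / 2 <= ln n%:R :> R.
  have h1 : ln 2 <= ln n%:R :> R.
    by rewrite ler_ln ?posrE // ler_nat.
  have h2 := @le_ln1Dx R (- 2^-1).
  have e : 1 + - 2^-1 = 2^-1 :> R by field.
  rewrite e lnV ?posrE // in h2.
  have : (-1 < - 2^-1 :> R). by rewrite ltrN2 invf_lt1 // ltr1n.
  move=> /h2 h3; lra.
have [a aa eD] := hD1.
have Dm0 : 0 < Dmin by rewrite eD subr_gt0 hopt.
have Dm1 : Dmin <= 1.
  by rewrite eD; have := hmu a; have := hmu astar => /andP[? ?] /andP[? ?]; lra.
set L := ln n%:R in L2 hL *.
have K0 : 0 <= K%:R :> R by [].
have Q1 : K%:R * L <= K%:R * L / Dmin.
  rewrite ler_pdivlMr //.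
  have : 0 <= K%:R * L by rewrite mulr_ge0 //; lra.
  nra.
have Q2 : K%:R / 2 <= K%:R * L by nra.
have hc : n%:R * (dlt R n *+ (K * n.+1 * n.+1 * 2)) <= 8 * K%:R.
  rewrite -[_ *+ (K * _ * _ * _)]mulr_natr /dlt !natrM -natr1.
  have -> : n%:R * (n%:R ^- 3 * (K%:R * (n%:R + 1) * (n%:R + 1) * 2))
      = 2 * K%:R * (n%:R + 1) ^+ 2 / n%:R ^+ 2 :> R.
    by field; rewrite gt_eqF.
  rewrite ler_pdivrMr ?exprn_gt0 //.
  have h : (n%:R + 1) ^+ 2 <= 4 * n%:R ^+ 2 :> R by nra.
  have := ler_wpM2l (_ : 0 <= 2 * K%:R) h.
  by rewrite mulr_ge0 //; rewrite !mulrA => /(_ isT) h'; apply: le_trans h' _; rewrite -!mulrA; lra.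
rewrite hL.
have e2 : K%:R * (32 * (3 * L) / Dmin) = 96 * (K%:R * L / Dmin) by ring.
rewrite e2.
lra.
Qed.
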